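(* Let $X$ be an irreducible homogeneous Markov chain on a finite state space $\overline{F}$ with transition matrix $r$ and unique stationary distribution $\eta=(\eta_j:j\in\overline{F})$, and let $\boldsymbol{\alpha}=(\alpha_j:j\in\overline{F})\in[0,1]^{\overline{F}}$ be non-zero. Let $X^{(\boldsymbol{\alpha})}$ be the Markov chain obtained from $X$ by randomized skipping with acceptance probabilities $\boldsymbol{\alpha}$, with transition matrix $r^{(\boldsymbol{\alpha})}=(I-rI_{(1-\boldsymbol{\alpha})})^{-1}rI_{\boldsymbol{\alpha}}$. Then $X^{(\boldsymbol{\alpha})}$ has the unique stationary distribution \[ \eta^{(\boldsymbol{\alpha})}=\big(C^{(\boldsymbol{\alpha})}\big)^{-1}(\eta_j\alpha_j:j\in\overline{F}),\qquad C^{(\boldsymbol{\alpha})}=\sum_{j\in\overline{F}}\eta_j\alpha_j, \] and $\eta^{(\boldsymbol{\alpha})}$ has support $\overline{F}\setminus B(\boldsymbol{\alpha})$, where $B(\boldsymbol{\alpha})=\{j\in\overline{F}:\alpha_j=0\}$.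
   Context: $I_{\boldsymbol{\alpha}}$ and $I_{(1-\boldsymbol{\alpha})}$ are the diagonal matrices indexed by $\overline{F}$ with diagonal entries $\alpha_j$, resp. $1-\alpha_j$; $I$ is the identity matrix. Randomized skipping: from current state $i$ a destination $j$ is proposed with probability $r(i,j)$ and accepted, independently of the past given $j$, with probability $\alpha_j$; if accepted the chain moves to $j$; if rejected, the walker makes an imaginary jump to $j$ taking no time and immediately proposes a new destination from row $j$ of $r$, which is again accepted with the corresponding acceptance probability, and so on until a proposal is accepted. *)

(* Defs.v *)
(* State space \overline{F} = 'I_n.+1 (finite, nonempty). *)
From HB Require Import structures.
From mathcomp Require Import all_boot all_order all_algebra.
Set Implicit Arguments. Unset Strict Implicit. Unset Printing Implicit Defensive.
Import Order.TTheory GRing.Theory Num.Theory.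
Local Open Scope ring_scope.

Section Defs.
Variables (R : realFieldType) (n : nat).

Definition stochastic (P : 'M[R]_n.+1) : Prop :=
  (forall i j, 0 <= P i j) /\ (forall i, \sum_j P i j = 1).

Definition distribution (v : 'rV[R]_n.+1) : Prop :=
  (forall j, 0 <= v 0 j) /\ \sum_j v 0 j = 1.

Definition stationary (P : 'M[R]_n.+1) (v : 'rV[R]_n.+1) : Prop :=
  distribution v /\ v *m P = v.

Definition irreducible (P : 'M[R]_n.+1) : Prop :=
  forall i j, exists k : nat, 0 < (P ^+ k) i j.

Definition I_one_minus (a : 'rV[R]_n.+1) : 'M[R]_n.+1 :=
  diag_mx (\row_j (1 - a 0 j)).
Definition I_alpha (a : 'rV[R]_n.+1) : 'M[R]_n.+1 := diag_mx a.

Definition skip_matrix (r : 'M[R]_n.+1) (a : 'rV[R]_n.+1) : 'M[R]_n.+1 :=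
  invmx (1%:M - r *m I_one_minus a) *m r *m I_alpha a.

Definition C_alpha (eta a : 'rV[R]_n.+1) : R := \sum_j eta 0 j * a 0 j.

Definition eta_alpha (eta a : 'rV[R]_n.+1) : 'rV[R]_n.+1 :=
  (C_alpha eta a)^-1 *: \row_j (eta 0 j * a 0 j).

End Defs.

(* Main.v *)
Require Import Defs.
From HB Require Import structures.
From mathcomp Require Import all_boot all_order all_algebra.
From mathcomp Require Import lra.
Import Order.TTheory GRing.Theory Num.Theory.
Local Open Scope ring_scope.
Set Implicit Arguments.
Unset Strict Implicit.

Lemma argmax_ex {R : realFieldType} {n} (f : 'I_n.+1 -> R) :
  exists i, forall j, f j <= f i.
Proof.
case: (@arg_maxP _ _ _ ord0 predT f isT) => i _ H. by exists i => j; apply: H.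
Qed.

Section Aux.
Variables (R : realFieldType) (n : nat) (r : 'M[R]_n.+1).
Hypothesis hr : stochastic r.
Hypothesis hirr : irreducible r.

Lemma rpow_ge0 k i j : 0 <= (r ^+ k) i j.
Proof.
elim: k i j => [|k IH] i j; first by rewrite expr0 mxE ler0n.
rewrite exprS -mulmxE mxE; apply: sumr_ge0 => l _; apply: mulr_ge0 => //.
exact: hr.1.
Qed.

Lemma sum_mulr (x : 'rV[R]_n.+1) : \sum_j (x *m r) 0 j = \sum_j x 0 j.
Proof.
under eq_bigr do rewrite mxE.
rewrite exchange_big; apply: eq_bigr => i _.
by rewrite -mulr_sumr hr.2 mulr1.
Qed.

Lemma mulr_ge0v (x : 'rV[R]_n.+1) j : (forall i, 0 <= x 0 i) -> 0 <= (x *m r) 0 j.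
Proof.
move=> hx; rewrite mxE; apply: sumr_ge0 => i _; apply: mulr_ge0 => //; exact: hr.1.
Qed.

Lemma inv_zero {x : 'rV[R]_n.+1} : (forall j, 0 <= x 0 j) -> x *m r = x ->
  forall i, x 0 i = 0 -> x = 0.
Proof.
move=> hx hxr i hi.
have xk : forall k, x *m r ^+ k = x.
  elim=> [|k IH]; first by rewrite expr0 mulmx1.
  by rewrite exprSr -mulmxE mulmxA IH.
apply/rowP => j; rewrite mxE.
have [k hk] := hirr j i.
have : x 0 j * (r ^+ k) j i <= (x *m r ^+ k) 0 i.
  rewrite mxE (bigD1 j) //= lerDl; apply: sumr_ge0 => l _.
  by apply: mulr_ge0 => //; apply: rpow_ge0.
rewrite xk hi pmulr_lle0 // => hle.
by apply/eqP; rewrite eq_le hle hx.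
Qed.

Lemma le_inv (x : 'rV[R]_n.+1) : (forall j, (x *m r) 0 j <= x 0 j) -> x *m r = x.
Proof.
move=> h.
have hs : \sum_j (x 0 j - (x *m r) 0 j) = 0.
  by rewrite sumrB sum_mulr subrr.
apply/rowP => j; apply/eqP; rewrite eq_sym -subr_eq0; apply/eqP.
by apply: (psumr_eq0P _ hs) => // i _; rewrite subr_ge0.
Qed.

Variable eta : 'rV[R]_n.+1.
Hypothesis heta : stationary r eta.

Lemma eta_pos j : 0 < eta 0 j.
Proof.
rewrite lt_def heta.1.1 andbT; apply/negP => /eqP h.
have e0 := inv_zero heta.1.1 heta.2 h.
have := heta.1.2; rewrite e0.
under eq_bigr do rewrite mxE.
by rewrite big1 // => /eqP; rewrite eq_sym oner_eq0.
Qed.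

Variable a : 'rV[R]_n.+1.
Hypothesis ha : forall j, 0 <= a 0 j <= 1.
Hypothesis ha0 : a != 0.

Lemma a_pos : exists j, 0 < a 0 j.
Proof.
case: (pickP (fun j => a 0 j != 0)) => [j hj|h].
  by exists j; rewrite lt_def hj (andP (ha j)).1.
by move/eqP: ha0; case; apply/rowP => j; rewrite mxE; apply/eqP; have := h j => /= /negbFE.
Qed.

Lemma subharm (v : 'rV[R]_n.+1) : (forall j, 0 <= v 0 j) ->
  (forall j, v 0 j <= (1 - a 0 j) * (v *m r) 0 j) -> v = 0.
Proof.
move=> hv hsub.
have [i hi] := argmax_ex (fun j => v 0 j / eta 0 j).
set c := v 0 i / eta 0 i.
have hle j : v 0 j <= c * eta 0 j.
  by rewrite -ler_pdivrMr ?eta_pos //; apply: hi.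
have hvr j : v 0 j <= (v *m r) 0 j.
  apply: le_trans (hsub j) _; rewrite ler_piMl ?mulr_ge0v // gerBl (andP (ha j)).1 //.
have hx j : 0 <= (c *: eta - v) 0 j by rewrite !mxE subr_ge0.
have hxi : (c *: eta - v) 0 i = 0.
  by rewrite !mxE /c divfK ?subrr // lt0r_neq0 ?eta_pos.
have hxr : (c *: eta - v) *m r = c *: eta - v.
  apply: le_inv => j.
  have -> : ((c *: eta - v) *m r) 0 j = c * eta 0 j - (v *m r) 0 j.
    by rewrite mulmxBl -scalemxAl heta.2 !mxE.
  rewrite [X in _ <= X]mxE [(c *: eta) 0 j]mxE lerD2l [(- v) 0 j]mxE lerN2; exact: hvr.
have x0 := inv_zero hx hxr hxi.
have hveq : v = c *: eta by apply/eqP; rewrite eq_sym -subr_eq0 x0.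
have hvr2 : v *m r = v by rewrite hveq -scalemxAl heta.2.
have [j0 hj0] := a_pos.
have := hsub j0; rewrite hvr2 mulrBl mul1r -subr_ge0 addrAC subrr add0r oppr_ge0.
rewrite pmulr_rle0 // => hv0.
have hv0' : v 0 j0 = 0 by apply/eqP; rewrite eq_le hv0 hv.
have hc : c = 0.
  move: hv0'; rewrite hveq mxE => /eqP; rewrite mulf_eq0 => /orP[/eqP //|].
  by rewrite (negbTE (lt0r_neq0 (eta_pos j0))).
by rewrite hveq hc scale0r.
Qed.
End Aux.

Theorem theorem2p6 (R : realFieldType) (n : nat)
  (r : 'M[R]_n.+1) (eta a : 'rV[R]_n.+1)
  (hr : stochastic r) (hirr : irreducible r) (heta : stationary r eta)
  (ha : forall j, 0 <= a 0 j <= 1) (ha0 : a != 0) :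
  (1%:M - r *m I_one_minus a) \in unitmx /\
  stochastic (skip_matrix r a) /\
  stationary (skip_matrix r a) (eta_alpha eta a) /\
  (forall pi, stationary (skip_matrix r a) pi -> pi = eta_alpha eta a) /\
  (forall j, eta_alpha eta a 0 j != 0 <-> a 0 j != 0).
Proof.
have hsub := subharm hr hirr heta ha ha0.
have epos := eta_pos hr hirr heta.
have [j0 hj0] := a_pos ha ha0.
have ha1 j : 0 <= 1 - a 0 j by rewrite subr_ge0 (andP (ha j)).2.
rewrite /skip_matrix.
set D := I_one_minus a. set A := I_alpha a. set M := 1%:M - r *m D.
have hDe (m : nat) (x : 'M[R]_(m, n.+1)) i j : (x *m D) i j = x i j * (1 - a 0 j).
  by rewrite /D /I_one_minus mul_mx_diag !mxE.
have hAe (m : nat) (x : 'M[R]_(m, n.+1)) i j : (x *m A) i j = x i j * a 0 j.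
  by rewrite /A /I_alpha mul_mx_diag !mxE.
have DA : D + A = 1%:M.
  apply/matrixP => i j; rewrite !mxE; case: eqP => _.
    by rewrite !mulr1n subrK.
  by rewrite !mulr0n addr0.
have hM : M \in unitmx.
  rewrite -row_free_unit -kermx_eq0; apply/eqP/row_matrixP => i; rewrite row0.
  set u := row i (kermx M).
  have hu : u *m M = 0 by apply/eqP; rewrite -sub_kermx row_sub.
  have hu' : u = u *m r *m D.
    by apply/eqP; move: hu; rewrite /M mulmxBr mulmx1 mulmxA => /eqP; rewrite subr_eq0.
  have hj j : u 0 j = (u *m r) 0 j * (1 - a 0 j) by rewrite {1}hu' hDe.
  have v0 : \row_j `|u 0 j| = 0.
    apply: hsub => j; rewrite mxE ?normr_ge0 // hj normrM (ger0_norm (ha1 j)) mulrC.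
    apply: ler_wpM2l => //; rewrite !mxE; apply: le_trans (ler_norm_sum _ _ _) _.
    apply: ler_sum => l _; by rewrite normrM (ger0_norm (hr.1 l j)) !mxE.
  apply/rowP => j; have := congr1 (fun w : 'rV[R]_n.+1 => w 0 j) v0; rewrite !mxE.
  by move/eqP; rewrite normr_eq0 => /eqP.
set N := invmx M.
have NM : N *m M = 1%:M by rewrite /N mulVmx.
have MN : M *m N = 1%:M by rewrite /N mulmxV.
have hNeq : N = 1%:M + N *m r *m D.
  by rewrite -{1}NM /M mulmxBr mulmx1 mulmxA subrK.
have hN k j : 0 <= N k j.
  set z := row k N.
  have hzr j' : (z *m r) 0 j' = (N *m r) k j'.
    by rewrite !mxE; apply: eq_bigr => l _; rewrite mxE.
  have hzj j' : z 0 j' = (k == j')%:R + (z *m r) 0 j' * (1 - a 0 j').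
    by rewrite mxE {1}hNeq [LHS]mxE hzr hDe mxE.
  set v := \row_j (if z 0 j < 0 then - z 0 j else 0).
  have hvz l : - z 0 l <= v 0 l.
    by rewrite [v 0 l]mxE; case: ifP => // h; rewrite oppr_le0 leNgt h.
  have hv0 l : 0 <= v 0 l by rewrite [v 0 l]mxE; case: ifP => // h; rewrite oppr_ge0 ltW.
  have v0 : v = 0.
    apply: hsub => // l; rewrite [v 0 l]mxE; case: ifP => h; last first.
      by apply: mulr_ge0 => //; apply: mulr_ge0v.
    have h1 : - (z *m r) 0 l <= (v *m r) 0 l.
      rewrite !mxE -sumrN; apply: ler_sum => i _; rewrite -mulNr.
      by apply: ler_wpM2r; [exact: hr.1 | exact: hvz].
    have h2 := ha1 l.
    have h3 : 0 <= (k == l)%:R :> R by rewrite ler0n.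
    rewrite hzj; set y := (z *m r) 0 l; set t := (v *m r) 0 l; set s := 1 - a 0 l.
    move: h1 h2 h3; rewrite -/y -/t -/s => h1 h2 h3; nra.
  have := congr1 (fun w : 'rV[R]_n.+1 => w 0 j) v0; rewrite !mxE; case: ifP => h.
    by move/eqP; rewrite oppr_eq0 => /eqP h0; move: h; rewrite h0 ltxx.
  by move=> _; move: h; rewrite ltNge => /negbFE.
set ones : 'cV[R]_n.+1 := const_mx 1.
have rones : r *m ones = ones.
  apply/colP => i; rewrite !mxE; under eq_bigr do rewrite mxE mulr1; exact: hr.2 i.
have Mone : M *m ones = r *m (A *m ones).
  rewrite /M mulmxBl mul1mx; apply/eqP; rewrite subr_eq.
  by rewrite -mulmxA -mulmxDr -mulmxDl [A + D]addrC DA mul1mx rones.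
have Sone : N *m r *m A *m ones = ones.
  by rewrite -!mulmxA -Mone mulmxA NM mul1mx.
have etaM : eta *m M = eta *m A.
  rewrite /M mulmxBr mulmx1 mulmxA heta.2 -{1}(mulmx1 eta) -DA mulmxDr.
  by rewrite addrAC subrr add0r.
have hCpos : 0 < C_alpha eta a.
  rewrite /C_alpha (bigD1 j0) //=; apply: ltr_pwDl; first exact: mulr_gt0.
  by apply: sumr_ge0 => j _; apply: mulr_ge0; [exact: ltW | exact: (andP (ha j)).1].
have hC0 : C_alpha eta a != 0 by rewrite lt0r_neq0.
have ea : eta_alpha eta a = (C_alpha eta a)^-1 *: (eta *m A).
  by rewrite /eta_alpha; congr (_ *: _); apply/rowP => j; rewrite hAe mxE.
split => //.
split.
  split=> [i j|i].
    rewrite hAe mxE; apply: mulr_ge0; last exact: (andP (ha j)).1.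
    by apply: sumr_ge0 => l _; apply: mulr_ge0 => //; exact: hr.1.
  have := congr1 (fun w : 'cV[R]_n.+1 => w i 0) Sone.
  rewrite [X in X = _]mxE [X in _ = X]mxE => <-.
  by apply: eq_bigr => j _; rewrite [ones j 0]mxE mulr1.
have hS : eta_alpha eta a *m (N *m r *m A) = eta_alpha eta a.
  rewrite ea -scalemxAl; congr (_ *: _).
  by rewrite -{1}etaM !mulmxA -(mulmxA eta M N) MN mulmx1 heta.2.
split.
  split => //; split.
    move=> j; rewrite /eta_alpha !mxE; apply: mulr_ge0; first by rewrite invr_ge0 ltW.
    by apply: mulr_ge0; [exact: ltW | exact: (andP (ha j)).1].
  under eq_bigr do rewrite /eta_alpha !mxE.
  by rewrite -mulr_sumr -/(C_alpha eta a) mulVf.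
split.
  move=> pi [[hpi0 hpi1] hpiS].
  set w := pi *m N.
  have wM : w *m M = pi by rewrite /w -mulmxA NM mulmx1.
  have piw : pi = w *m r *m A by rewrite -{1}hpiS /w !mulmxA.
  have wr : w *m r = w.
    move: wM; rewrite /M mulmxBr mulmx1 {1}piw => /eqP; rewrite subr_eq mulmxA.
    by rewrite -mulmxDr [A + D]addrC DA mulmx1 eq_sym => /eqP.
  have me (X Y : 'rV[R]_n.+1) c0 k : (X - c0 *: Y) 0 k = X 0 k - c0 * Y 0 k.
    by rewrite !mxE.
  have [i hi] := argmax_ex (fun j => - (w 0 j / eta 0 j)).
  set c := w 0 i / eta 0 i.
  have hx j : 0 <= (w - c *: eta) 0 j.
    rewrite me subr_ge0 -ler_pdivlMr ?epos // -lerN2; exact: hi.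
  have hxi : (w - c *: eta) 0 i = 0.
    by rewrite me /c divfK ?subrr // lt0r_neq0 ?epos.
  have hxr : (w - c *: eta) *m r = w - c *: eta.
    by rewrite mulmxBl wr -scalemxAl heta.2.
  have x0 := inv_zero hr hirr hx hxr hxi.
  have hw : w = c *: eta by apply/eqP; rewrite -subr_eq0 x0.
  have hpi : pi = c *: (eta *m A) by rewrite piw hw -!scalemxAl heta.2.
  have hc : c = (C_alpha eta a)^-1.
    apply: (mulIf hC0); rewrite mulVf // -hpi1 hpi /C_alpha mulr_sumr.
    by apply: eq_bigr => j _; rewrite [(_ *: _ : 'rV[R]_n.+1) 0 j]mxE hAe.
  by rewrite hpi ea hc.
move=> j; rewrite /eta_alpha !mxE !mulf_eq0 invr_eq0 (negbTE hC0) /=.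
by rewrite (negbTE (lt0r_neq0 (epos j))).
Qed.
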